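(* Let $0<p<q$ be coprime integers. Then $\mathbb{M}(\mathrm{ch}_{p/q}(L,LR))=\mathbb{L}(p,q)$. In other words, the modular knot associated with the word $\mathrm{ch}_{p/q}(L,LR)$ is the $(p,q)$-torus knot, i.e. the closure of $(\sigma_1\sigma_2\cdots\sigma_{p-1})^q\in B_p$.
   Context: Christoffel words: for coprime $0<p<q$, the snake graph $S(p/q)$ is the set of unit squares of the $q\times p$ grid (width $q$, height $p$) meeting the diagonal from $(0,0)$ to $(q,p)$. The lower Christoffel word $\mathrm{ch}_{p/q}(A,B)$ is obtained by following the lower boundary path of $S(p/q)$ from $(0,0)$ to $(q,p)$ and writing $A$ for each step one unit to the right and $B$ for each step one unit right followed by one unit up; equivalently, it is the word $w_1\cdots w_q$ with $w_i=B$ if $\lfloor ip/q\rfloor>\lfloor (i-1)p/q\rfloor$ and $w_i=A$ otherwise (e.g. $\mathrm{ch}_{4/7}(A,B)=ABABABB$). $\mathrm{ch}_{p/q}(L,LR)$ denotes the word over $\{L,R\}$ obtained by substituting $A\mapsto L$, $B\mapsto LR$. Modular braid of a word: for a primitive word $W$ (not a proper power of a shorter word) over $\{L,R\}$ of length $m\ge2$, with $\mathrm{cyc}$ moving the first letter to the end, let $\mathrm{rank}_j(W)$ ($1\le j\le m$) be the rank of $\mathrm{cyc}^{j-1}(W)$ among the cyclic permutations of $W$ in ascending lexicographic order with $L<R$, and $\mathrm{rank}_{m+1}(W)=\mathrm{rank}_1(W)$. $\mathbb{M}(W)$ is the $m$-strand braid joining the $\mathrm{rank}_j(W)$-th top point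 to the $\mathrm{rank}_{j+1}(W)$-th bottom point by straight segments ($1\le j\le m$), the strand from a top point whose cyclic permutation begins with $L$ passing over one whose cyclic permutation begins with $R$ at each crossing. Its closure is a modular knot. Lorenz braid $\mathbb{L}(p,q)$: the braid with $p+q$ strands in which the $q$ leftmost top points are joined in order (order-preservingly) to the bottom points $p+1,\dots,p+q$, and the $p$ rightmost top points are joined in order to the bottom points $1,\dots,p$, by straight segments, strands from the left top part passing over strands from the right top part. Braids are compared as geometric braid diagrams. *)

(* Defs.v *)
From HB Require Import structures.
From mathcomp Require Import all_boot.
Set Implicit Arguments. Unset Strict Implicit. Unset Printing Implicit Defensive.

Inductive letter := L | R.
Definition letter_eqb (x y : letter) : bool :=
  match x, y with L, L | R, R => true | _, _ => false end.
Lemma letter_eqP : Equality.axiom letter_eqb.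
Proof. by case; case; constructor. Qed.
HB.instance Definition _ := hasDecEq.Build letter letter_eqP.

Definition letter_lt (x y : letter) : bool :=
  match x, y with L, R => true | _, _ => false end.

Fixpoint lexlt (s t : seq letter) : bool :=
  match s, t with
  | [::], [::] => false
  | [::], _ :: _ => true
  | _ :: _, [::] => false
  | x :: s', y :: t' => letter_lt x y || ((x == y) && lexlt s' t')
  end.

Definition christoffel {T : Type} (p q : nat) (A B : seq T) : seq T :=
  flatten [seq (if (i * p) %/ q > (i.-1 * p) %/ q then B else A) | i <- iota 1 q].

Definition ch_LLR (p q : nat) : seq letter := christoffel p q [:: L] [:: L; R].

(* A geometric braid diagram with straight strands: number of strands,
   list of strands (top point, bottom point), points numbered 1..n from
   left to right, and [over s t] = strand s passes over strand t. *)
Record braid := Braid {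
  bn : nat;
  bstrands : seq (nat * nat);
  bover : nat * nat -> nat * nat -> bool }.

Definition cross (s t : nat * nat) : bool :=
  ((s.1 < t.1) && (t.2 < s.2)) || ((t.1 < s.1) && (s.2 < t.2)).

Definition braid_eq (B1 B2 : braid) : Prop :=
  [/\ bn B1 = bn B2,
      perm_eq (bstrands B1) (bstrands B2) &
      forall s t, s \in bstrands B1 -> t \in bstrands B1 -> cross s t ->
        bover B1 s t = bover B2 s t].

(* cyc^{j-1}(W) for 1 <= j, indices taken mod |W| (so rank_{m+1} = rank_1) *)
Definition cycperm (W : seq letter) (j : nat) : seq letter :=
  rot (j.-1 %% size W) W.

Definition rank (W : seq letter) (j : nat) : nat :=
  (count (fun k => lexlt (rot k W) (cycperm W j)) (iota 0 (size W))).+1.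

Definition top_starts (W : seq letter) (x : letter) (r : nat) : bool :=
  has (fun j => (rank W j == r) && (head L (cycperm W j) == x))
      (iota 1 (size W)).

Definition modular_braid (W : seq letter) : braid :=
  {| bn := size W;
     bstrands := [seq (rank W j, rank W j.+1) | j <- iota 1 (size W)];
     bover := fun s t => top_starts W L s.1 && top_starts W R t.1 |}.

Definition primitive (W : seq letter) : Prop :=
  forall (u : seq letter) (k : nat), 1 < k -> W <> flatten (nseq k u).

Definition lorenz_braid (p q : nat) : braid :=
  {| bn := p + q;
     bstrands := [seq (i, p + i) | i <- iota 1 q] ++ [seq (q + i, i) | i <- iota 1 p];
     bover := fun s t => (s.1 <= q) && (q < t.1) |}.

(* Main.v *)
Require Import Defs.
From mathcomp Require Import all_boot zify.

Definition lett (q x : nat) : letter := if q <= x then R else L.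
Definition D (p q r len : nat) : seq letter :=
  [seq lett q ((r + i * p) %% (p + q)) | i <- iota 0 len].

Lemma size_D p q r len : size (D p q r len) = len.
Proof. by rewrite size_map size_iota. Qed.

Lemma D_cons p q r len :
  D p q r len.+1 = lett q (r %% (p + q)) :: D p q (r + p) len.
Proof.
rewrite /D /= addn0; congr (_ :: _).
rewrite -[1]addn0 iotaDl -map_comp; apply: eq_map => i /=.
by congr (lett q (_ %% _)); rewrite mulnDl mul1n addnA.
Qed.

Lemma D_rcons p q r len :
  D p q r (len + 1) = rcons (D p q r len) (lett q ((r + len * p) %% (p + q))).
Proof. by rewrite /D iotaD map_cat /= cats1. Qed.

Lemma D_mod p q r len : D p q (r %% (p + q)) len = D p q r len.
Proof. by apply: eq_map => i; rewrite modnDml. Qed.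

Lemma rot1_D p q r : 0 < p + q ->
  rot 1 (D p q r (p + q)) = D p q (r + p) (p + q).
Proof.
move=> hn; case E: (p + q) hn => [|n'] // _.
rewrite D_cons rot1_cons -addn1 D_rcons; congr rcons.
congr (lett q _).
have -> : r + p + n' * p = p * (p + q) + r by rewrite E; nia.
by rewrite modnMDl.
Qed.

Lemma rot_D p q r k : 0 < p + q -> k <= p + q ->
  rot k (D p q r (p + q)) = D p q (r + k * p) (p + q).
Proof.
move=> hn; elim: k => [|k IH] hk.
  by rewrite rot0 mul0n addn0.
rewrite -add1n rotD ?size_D; last by lia.
rewrite IH; last by lia.
rewrite rot1_D //; congr D; lia.
Qed.

Lemma lexlt_irr s : lexlt s s = false.
Proof. by elim: s => [|[] s IH] //=; rewrite IH. Qed.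

Lemma lexlt_asym s t : lexlt s t -> ~~ lexlt t s.
Proof.
elim: s t => [|x s IH] [|y t] //=.
by case: x; case: y => //= /IH.
Qed.

Lemma lexlt_cons x s t : lexlt (x :: s) (x :: t) = lexlt s t.
Proof. by case: x. Qed.

Lemma lex_main p q len : 0 < q -> forall r r', r < r' -> r' < p + q ->
  (exists i, i < len /\ (r + i * p) %% (p + q) = q.-1) ->
  lexlt (D p q r len) (D p q r' len).
Proof.
move=> hq; elim: len => [|len IH] r r' hr hr' [i [hi hiw]]; first by [].
rewrite !D_cons !modn_small; try lia.
rewrite /lett.
case: (leqP q r) => h1.
  rewrite (leq_trans h1 (ltnW hr)) lexlt_cons.
  rewrite -D_mod -[D p q (r' + p) _]D_mod.
  have e1 : (r + p) %% (p + q) = r - q.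
    have -> : r + p = (r - q) + (p + q) by lia.
    by rewrite modnDr modn_small; lia.
  have e2 : (r' + p) %% (p + q) = r' - q.
    have -> : r' + p = (r' - q) + (p + q) by lia.
    by rewrite modnDr modn_small; lia.
  rewrite e1 e2; apply: IH; try lia.
  case: i hi hiw => [|i] hi hiw.
    by move: hiw; rewrite mul0n addn0 modn_small; lia.
  exists i; split; first by lia.
  by rewrite -e1 modnDml -hiw mulSn addnA.
case: (leqP q r') => h2; first by [].
rewrite lexlt_cons.
rewrite -D_mod -[D p q (r' + p) _]D_mod.
have e1 : (r + p) %% (p + q) = r + p by rewrite modn_small; lia.
have e2 : (r' + p) %% (p + q) = r' + p by rewrite modn_small; lia.
rewrite e1 e2; apply: IH; try lia.
case: i hi hiw => [|i] hi hiw.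
  by move: hiw; rewrite mul0n addn0 modn_small; lia.
exists i; split; first by lia.
by rewrite -hiw mulSn addnA.
Qed.

Lemma mul_inj p n k1 k2 : coprime n p -> k1 < n -> k2 < n ->
  (k1 * p) %% n = (k2 * p) %% n -> k1 = k2.
Proof.
move=> cop h1 h2 e.
wlog le : k1 k2 h1 h2 e / k2 <= k1.
  move=> W; case: (leqP k2 k1) => h; first exact: W.
  by symmetry; apply: W => //; lia.
have : (k1 * p == k2 * p %[mod n]) by apply/eqP.
rewrite eqn_mod_dvd ?leq_mul2r ?le ?orbT // -mulnBl Gauss_dvdl //.
move=> /dvdn_leq; case: (ltnP k2 k1) => h; last by lia.
by move=> /(_ ltac:(lia)); lia.
Qed.

Lemma perm_mul p n : coprime n p -> 0 < n ->
  perm_eq [seq (k * p) %% n | k <- iota 0 n] (iota 0 n).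
Proof.
move=> cop hn.
have U : uniq [seq (k * p) %% n | k <- iota 0 n].
  rewrite map_inj_in_uniq ?iota_uniq // => a b.
  rewrite !mem_iota !add0n => ha hb; exact: mul_inj.
apply: uniq_perm => //; first exact: iota_uniq.
have sub : {subset [seq (k * p) %% n | k <- iota 0 n] <= iota 0 n}.
  move=> x /mapP [k _ ->]; rewrite mem_iota add0n ltn_pmod //.
have [_ E] := uniq_min_size U sub (eq_leq (esym (size_map _ _))).
exact: E.
Qed.

Lemma surj_mul {p n} x : coprime n p -> x < n -> exists2 k, k < n & (k * p) %% n = x.
Proof.
move=> cop hx.
have : x \in [seq (k * p) %% n | k <- iota 0 n].
  by rewrite (perm_mem (perm_mul _ _ cop _)) ?mem_iota //; lia.
by case/mapP => k; rewrite mem_iota => /andP[_ hk] ->; exists k.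
Qed.

Lemma lex_iff p q a b : 0 < q -> coprime (p + q) p -> a < p + q -> b < p + q ->
  lexlt (D p q a (p + q)) (D p q b (p + q)) = (a < b).
Proof.
move=> hq cop ha hb.
have key : forall a b, a < b -> b < p + q -> lexlt (D p q a (p + q)) (D p q b (p + q)).
  move=> a' b' hab hb'.
  apply: lex_main => //.
  have [k hk hkw] := surj_mul ((q.-1 + (p + q) - a') %% (p + q)) cop (ltn_pmod _ (ltac:(lia) : 0 < p + q)).
  exists k; split => //.
  rewrite -modnDmr hkw modnDmr.
  have -> : a' + (q.-1 + (p + q) - a') = q.-1 + (p + q) by lia.
  by rewrite modnDr modn_small //; lia.
case: (ltnP a b) => h; first exact: key.
case: (ltnP b a) => h'.
  by apply/negP => /lexlt_asym; rewrite key.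
have -> : a = b by lia.
by rewrite lexlt_irr.
Qed.

Lemma count_lt_iota_min b n : count (fun x => x < b) (iota 0 n) = minn b n.
Proof.
elim: n => [|n IH]; first by rewrite minn0.
rewrite -addn1 iotaD count_cat /= add0n addn0 IH.
case: (ltnP n b) => h /=; lia.
Qed.

Lemma count_lt_iota b n : b <= n -> count (fun x => x < b) (iota 0 n) = b.
Proof. by move=> h; rewrite count_lt_iota_min; lia. Qed.

Definition blk p q i : seq letter :=
  if (i * p) %/ q > (i.-1 * p) %/ q then [:: L; R] else [:: L].

Lemma chr_pref p q m : 0 < q -> p < q ->
  flatten [seq blk p q i | i <- iota 1 m] = D p q 0 (m + (m * p) %/ q).
Proof.
move=> hq hpq; elim: m => [|m IH]; first by rewrite mul0n div0n.
rewrite -[m.+1]addn1 iotaD map_cat flatten_cat IH /= cats0 /blk.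
have E := divn_eq (m * p) q.
have hr := ltn_pmod (m * p) hq.
move: E hr; set a := m * p %/ q; set r := m * p %% q => E hr.
have e0 : ((0 + (m + a) * p) %% (p + q)) = r.
  have -> : 0 + (m + a) * p = a * (p + q) + r by nia.
  by rewrite modnMDl modn_small //; lia.
rewrite (addnC m 1).
case: (ltnP (r + p) q) => h.
  have ha : (1 + m) * p %/ q = a.
    have -> : (1 + m) * p = a * q + (r + p) by nia.
    by rewrite divnMDl // divn_small // addn0.
  rewrite ha ltnn.
  have -> : 1 + m + a = (m + a) + 1 by lia.
  by rewrite D_rcons e0 cats1 /lett; have -> : (q <= r) = false by lia.
have ha : (1 + m) * p %/ q = a.+1.
  have -> : (1 + m) * p = a.+1 * q + (r + p - q) by nia.
  by rewrite divnMDl // divn_small ?addn0 //; lia.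
rewrite ha ltnSn.
have -> : 1 + m + a.+1 = (m + a) + 1 + 1 by lia.
rewrite D_rcons D_rcons e0 -!cats1 -catA /=.
have e1 : ((0 + (m + a + 1) * p) %% (p + q)) = r + p.
  have -> : 0 + (m + a + 1) * p = a * (p + q) + (r + p) by nia.
  by rewrite modnMDl modn_small //; lia.
rewrite e1 /lett.
have -> : (q <= r) = false by lia.
by have -> : (q <= r + p) = true by lia.
Qed.

Lemma ch_D p q : 0 < p -> p < q -> ch_LLR p q = D p q 0 (p + q).
Proof.
move=> hp hpq.
rewrite /ch_LLR /christoffel.
rewrite (chr_pref p q q _ hpq); last by lia.
by rewrite mulKn ?(addnC q) //; lia.
Qed.

Lemma head_D p q r len : 0 < len -> head L (D p q r len) = lett q (r %% (p + q)).
Proof. by case: len => // len _; rewrite D_cons. Qed.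

Lemma size_fl (u : seq letter) k : size (flatten (nseq k u)) = k * size u.
Proof. by elim: k => //= k IH; rewrite size_cat IH mulSn. Qed.

Lemma fl_rcons (u : seq letter) k : flatten (nseq k.+1 u) = flatten (nseq k u) ++ u.
Proof.
elim: k => [|k IH]; first by rewrite /= cats0.
transitivity (u ++ flatten (nseq k.+1 u)); first by [].
by rewrite IH catA -IH.
Qed.

Lemma eq_perm_eq (T : eqType) (s t : seq T) : s = t -> perm_eq s t.
Proof. by move->. Qed.

Section Main.
Variables p q : nat.
Hypothesis hp : 0 < p.
Hypothesis hpq : p < q.
Hypothesis cpq : coprime p q.

Let n := p + q.
Let W := D p q 0 n.

Lemma hn : 0 < n. Proof. rewrite /n; lia. Qed.
Lemma hq : 0 < q. Proof. lia. Qed.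
Lemma cop : coprime n p.
Proof. by rewrite /n /coprime gcdnC gcdnDl. Qed.
Lemma sizeW : size W = n. Proof. exact: size_D. Qed.

Lemma rotW k : k < n -> rot k W = D p q ((k * p) %% n) n.
Proof. by move=> hk; rewrite /W rot_D ?add0n ?D_mod //; [exact: hn | exact: ltnW]. Qed.

Lemma cycW j : cycperm W j = D p q ((j.-1 * p) %% n) n.
Proof.
rewrite /cycperm sizeW rotW ?ltn_pmod ?hn //.
by rewrite modnMml.
Qed.

Lemma rankW j : rank W j = ((j.-1 * p) %% n).+1.
Proof.
rewrite /rank sizeW; congr S.
set rho := (j.-1 * p) %% n.
have hrho : rho < n by rewrite ltn_pmod ?hn.
rewrite (@eq_in_count _ _ (fun k => (k * p) %% n < rho)); last first.
  move=> k; rewrite mem_iota add0n => hk.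
  by rewrite rotW // cycW -/rho lex_iff ?hq ?cop ?ltn_pmod ?hn.
rewrite -(count_map (fun k => (k * p) %% n) (fun x => x < rho)).
rewrite (permP (perm_mul _ _ cop hn)) count_lt_iota //; exact: ltnW.
Qed.

Lemma headW j : head L (cycperm W j) = lett q ((j.-1 * p) %% n).
Proof. by rewrite cycW head_D ?hn // modn_mod. Qed.

Lemma topW x j : j \in iota 1 n ->
  top_starts W x (rank W j) = (lett q (rank W j).-1 == x).
Proof.
move=> hj; rewrite /top_starts sizeW.
apply/hasP/idP.
  by case=> j' _ /andP[/eqP <- /eqP <-]; rewrite rankW headW.
by move=> h; exists j => //; rewrite eqxx /= headW -(eqP h) rankW.
Qed.

Lemma topL j : j \in iota 1 n -> top_starts W L (rank W j) = (rank W j <= q).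
Proof.
move=> hj; rewrite topW // rankW /lett /=.
by case: (leqP q ((j.-1 * p) %% n)).
Qed.

Lemma topR j : j \in iota 1 n -> top_starts W R (rank W j) = (q < rank W j).
Proof.
move=> hj; rewrite topW // rankW /lett /= ltnS.
by case: (leqP q ((j.-1 * p) %% n)).
Qed.

Lemma strandsW :
  perm_eq [seq (rank W j, rank W j.+1) | j <- iota 1 n] (bstrands (lorenz_braid p q)).
Proof.
have -> : [seq (rank W j, rank W j.+1) | j <- iota 1 n] =
   [seq (x.+1, ((x + p) %% n).+1) | x <- [seq (k * p) %% n | k <- iota 0 n]].
  rewrite -map_comp -[1]/(1 + 0) iotaDl -map_comp; apply: eq_map => k /=.
  by rewrite !rankW /= add1n mulSn (addnC p) modnDml.
rewrite (perm_trans (perm_map _ (perm_mul _ _ cop hn))) //=.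
rewrite /n addnC iotaD map_cat add0n.
have -> : iota 1 q = map (addn 1) (iota 0 q) by rewrite -iotaDl.
have -> : iota q p = map (addn q) (iota 0 p) by rewrite -iotaDl addn0.
have -> : iota 1 p = map (addn 1) (iota 0 p) by rewrite -iotaDl.
rewrite -!map_comp; apply: eq_perm_eq; congr (_ ++ _); apply/eq_in_map => x; rewrite mem_iota add0n => hx /=.
  have -> : (x + p) %% (q + p) = x + p by rewrite modn_small; lia.
  congr pair; lia.
have -> : (q + x + p) %% (q + p) = x.
  have -> : q + x + p = x + (q + p) by lia.
  rewrite modnDr modn_small //; lia.
congr pair; lia.
Qed.

Lemma main_sec :
  primitive W /\ 2 <= size W /\ braid_eq (modular_braid W) (lorenz_braid p q).
Proof.
split.
  move=> u k hk hW; case: k hk hW => [|[|k]] // _ hW.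
  have hsz : n = k.+2 * size u by rewrite -sizeW hW size_fl.
  have hs : 0 < size u < n.
    case: (size u) hsz => [|s] hsz; first by move: hn; rewrite hsz muln0.
    apply/andP; split => //; rewrite hsz; nia.
  have hrot : rot (size u) W = W.
    have -> : W = u ++ flatten (nseq k.+1 u) by rewrite hW.
    by rewrite rot_size_cat -fl_rcons.
  move: hrot; rewrite rotW; last by case/andP: hs.
  set rho := (size u * p) %% n => hrot.
  case: (posnP rho) => hr.
    have := @mul_inj p n (size u) 0 cop; rewrite mul0n mod0n -/rho hr.
    move=> /(_ ltac:(lia) hn erefl) h0; by move: hs; rewrite h0.
  have := @lex_iff p q 0 rho hq cop hn (ltn_pmod _ hn).
  by rewrite hr hrot lexlt_irr.
split; first by rewrite sizeW /n; lia.
split.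
- exact: sizeW.
- by rewrite /= sizeW; exact: strandsW.
- move=> s t /mapP [j hj ->] /mapP [j' hj' ->] _ /=.
  rewrite sizeW in hj hj'.
  by rewrite topL // topR.
Qed.

End Main.

Theorem theorem4p2 (p q : nat) :
  0 < p -> p < q -> coprime p q ->
  primitive (ch_LLR p q) /\ 2 <= size (ch_LLR p q) /\
  braid_eq (modular_braid (ch_LLR p q)) (lorenz_braid p q).
Proof.
move=> hp hpq cpq; rewrite ch_D //.
exact: (@main_sec p q hp hpq cpq).
Qed.
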